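(* Let $P_E$ be the set of all primitive Eisenstein triples, i.e. triples $(a,b,c) \in \mathbb{Z}^3_{\geq 0} \setminus \{(0,0,0)\}$ with $a^2 - ab + b^2 = c^2$, $a \leq b$ and $\gcd(a,b,c)=1$. Let $G_E = \langle U, M_1, M_2, M_3 \rangle$ be the non-commutative monoid generated by the matrices $$U = \begin{bmatrix} -1&1&0 \\ 0&1&0 \\ 0&0&1 \end{bmatrix},\quad M_1 = \begin{bmatrix} 3 & -4 & 4 \\ 7 & -7 & 8 \\ 6 & -6 & 7 \end{bmatrix},\quad M_2 = \begin{bmatrix} -4 & 3 & 4 \\ -7 & 7 & 8 \\ -6 & 6 & 7 \end{bmatrix},\quad M_3 = \begin{bmatrix} 1 & 3 & 4 \\ 0 & 7 & 8 \\ 0 & 6 & 7 \end{bmatrix}$$ in $\operatorname{GL}_3(\mathbb{Z})$. Then $G_E$ acts on the set $P_E$ by left multiplication: $$M(a,b,c) = M \begin{bmatrix} a \\ b \\ c \end{bmatrix} \in P_E$$ for every $M \in G_E$ and $(a,b,c) \in P_E$.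
   Context: An Eisenstein triple is a solution $(a,b,c) \in \mathbb{Z}^3_{\geq 0}\setminus\{(0,0,0)\}$ of $a^2-ab+b^2=c^2$; it is primitive if additionally $a \leq b$ and $\gcd(a,b,c)=1$. Note $U(a,b,c) = (b-a,b,c)$. *)

(* Defs.v *)
From mathcomp Require Import all_boot all_order all_algebra.
Set Implicit Arguments. Unset Strict Implicit. Unset Printing Implicit Defensive.
Import Order.TTheory GRing.Theory Num.Theory.
Local Open Scope ring_scope.

Definition mx3 (a11 a12 a13 a21 a22 a23 a31 a32 a33 : int) : 'M[int]_3 :=
  \matrix_(i < 3, j < 3)
    nth 0 (nth [::] [:: [:: a11; a12; a13]; [:: a21; a22; a23]; [:: a31; a32; a33]] i) j.

Definition U_E  : 'M[int]_3 := mx3 (-1) 1 0   0 1 0   0 0 1.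
Definition M1_E : 'M[int]_3 := mx3 3 (-4) 4   7 (-7) 8   6 (-6) 7.
Definition M2_E : 'M[int]_3 := mx3 (-4) 3 4   (-7) 7 8   (-6) 6 7.
Definition M3_E : 'M[int]_3 := mx3 1 3 4   0 7 8   0 6 7.

Inductive in_GE : 'M[int]_3 -> Prop :=
  | GE_one : in_GE 1%:M
  | GE_U : in_GE U_E
  | GE_M1 : in_GE M1_E
  | GE_M2 : in_GE M2_E
  | GE_M3 : in_GE M3_E
  | GE_mul A B : in_GE A -> in_GE B -> in_GE (A *m B).

Definition primitive_eisenstein (a b c : int) : Prop :=
  (0 <= a) /\ (0 <= b) /\ (0 <= c) /\
  ~ (a = 0 /\ b = 0 /\ c = 0) /\
  a ^+ 2 - a * b + b ^+ 2 = c ^+ 2 /\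
  (a <= b) /\
  gcdz (gcdz a b) c = 1.

Definition in_PE (v : 'cV[int]_3) : Prop :=
  primitive_eisenstein (v ord0 ord0) (v (inord 1) ord0) (v (inord 2) ord0).

(* Main.v *)
Require Import Defs.
From mathcomp Require Import all_boot all_order all_algebra.
Local Open Scope ring_scope.
Import Order.TTheory GRing.Theory Num.Theory.
From mathcomp Require Import ring lra zify.
Lemma mx3_mulE (x11 x12 x13 x21 x22 x23 x31 x32 x33 : int) (v : 'cV[int]_3) :
  let a := v ord0 ord0 in let b := v (inord 1) ord0 in let c := v (inord 2) ord0 in
  let w := mx3 x11 x12 x13 x21 x22 x23 x31 x32 x33 *m v in
  [/\ w ord0 ord0 = x11 * a + x12 * b + x13 * c,
      w (inord 1) ord0 = x21 * a + x22 * b + x23 * c &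
      w (inord 2) ord0 = x31 * a + x32 * b + x33 * c].
Proof.
have e1 : (inord 1 : 'I_3) = Ordinal (isT : 1 < 3)%N by apply/val_inj; rewrite /= inordK.
have e2 : (inord 2 : 'I_3) = Ordinal (isT : 2 < 3)%N by apply/val_inj; rewrite /= inordK.
rewrite /= e1 e2 /mx3 !mxE !big_ord_recr !big_ord0 /= !mxE /= !add0r.
by split; repeat f_equal; apply/val_inj.
Qed.

Lemma gcd_one (g : int) : (g %| 1)%Z -> 0 <= g -> g = 1.
Proof.
rewrite dvdz1 => /eqP h g0.
by rewrite -[g]gez0_abs // h.
Qed.

Lemma gcd_transfer (a b c a' b' c' y11 y12 y13 y21 y22 y23 y31 y32 y33 : int) :
  a = y11 * a' + y12 * b' + y13 * c' ->
  b = y21 * a' + y22 * b' + y23 * c' ->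
  c = y31 * a' + y32 * b' + y33 * c' ->
  gcdz (gcdz a b) c = 1 -> gcdz (gcdz a' b') c' = 1.
Proof.
move=> ha hb hc h; apply: gcd_one; last by [].
set g := gcdz (gcdz a' b') c'.
have ga : (g %| a')%Z by exact: (dvdz_trans (dvdz_gcdl _ c') (dvdz_gcdl a' b')).
have gb : (g %| b')%Z by exact: (dvdz_trans (dvdz_gcdl _ c') (dvdz_gcdr a' b')).
have gc : (g %| c')%Z by exact: (dvdz_gcdr (gcdz a' b') c').
have lin : forall x y z : int, (g %| x * a' + y * b' + z * c')%Z.
  by move=> x y z; rewrite !rpredD // dvdz_mull.
suff : (g %| gcdz (gcdz a b) c)%Z by rewrite h.
by rewrite !dvdz_gcd ha hb hc !lin.
Qed.

Lemma key (a b c : int) : 0 <= a -> a <= b -> 0 <= c -> a ^+ 2 - a * b + b ^+ 2 = c ^+ 2 ->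
  2 * b - a <= 2 * c.
Proof. move=> *; nia. Qed.

Lemma nz_of_gcd (x y z : int) : gcdz (gcdz x y) z = 1 -> ~ (x = 0 /\ y = 0 /\ z = 0).
Proof. by move=> h [hx [hy hz]]; move: h; rewrite hx hy hz. Qed.

Ltac pe_tac y11 y12 y13 y21 y22 y23 y31 y32 y33 :=
  let a0 := fresh in let b0 := fresh in let c0 := fresh in let nz := fresh in
  let E := fresh in let ab := fresh in let G := fresh in let K := fresh in let G' := fresh in
  move=> a b c [a0 [b0 [c0 [nz [E [ab G]]]]]];
  have K := @key a b c a0 ab c0 E;
  match goal with |- primitive_eisenstein ?A ?B ?C => have G' := @gcd_transfer a b c A B C y11 y12 y13 y21 y22 y23 y31 y32 y33
     ltac:(ring) ltac:(ring) ltac:(ring) G end;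
  split; [lia|]; split; [lia|]; split; [lia|];
  split; [ exact: nz_of_gcd G' |];
  split; [nia|]; split; [lia| exact G'].

Definition gen_ok (x11 x12 x13 x21 x22 x23 x31 x32 x33 : int) :=
  forall a b c, primitive_eisenstein a b c ->
  primitive_eisenstein (x11*a+x12*b+x13*c) (x21*a+x22*b+x23*c) (x31*a+x32*b+x33*c).

Lemma gen_okU : gen_ok (-1) 1 0 0 1 0 0 0 1.
Proof. pe_tac (-1 : int) (1 : int) (0 : int) (0 : int) (1 : int) (0 : int) (0 : int) (0 : int) (1 : int). Qed.
Lemma gen_ok1 : gen_ok 3 (-4) 4 7 (-7) 8 6 (-6) 7.
Proof. pe_tac (-1 : int) (4 : int) (-4 : int) (-1 : int) (-3 : int) (4 : int) (0 : int) (-6 : int) (7 : int). Qed.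
Lemma gen_ok2 : gen_ok (-4) 3 4 (-7) 7 8 (-6) 6 7.
Proof. pe_tac (-1 : int) (-3 : int) (4 : int) (-1 : int) (4 : int) (-4 : int) (0 : int) (-6 : int) (7 : int). Qed.
Lemma gen_ok3 : gen_ok 1 3 4 0 7 8 0 6 7.
Proof. pe_tac (1 : int) (3 : int) (-4 : int) (0 : int) (7 : int) (-8 : int) (0 : int) (-6 : int) (7 : int). Qed.

Lemma gen_mx (x11 x12 x13 x21 x22 x23 x31 x32 x33 : int) (v : 'cV[int]_3) :
  gen_ok x11 x12 x13 x21 x22 x23 x31 x32 x33 -> in_PE v ->
  in_PE (mx3 x11 x12 x13 x21 x22 x23 x31 x32 x33 *m v).
Proof.
move=> H hv; rewrite /in_PE.
have [-> -> ->] := mx3_mulE x11 x12 x13 x21 x22 x23 x31 x32 x33 v.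
exact: H.
Qed.

Theorem lemma6p1 (M : 'M[int]_3) (v : 'cV[int]_3) :
  in_GE M -> in_PE v -> in_PE (M *m v).
Proof.
move=> HM; elim: HM v => {M}.
- by move=> v; rewrite mul1mx.
- move=> v; exact: gen_mx gen_okU.
- move=> v; exact: gen_mx gen_ok1.
- move=> v; exact: gen_mx gen_ok2.
- move=> v; exact: gen_mx gen_ok3.
- move=> A B _ IA _ IB v hv; rewrite -mulmxA; exact: IA (IB _ hv).
Qed.
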